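(* Let $A\in\mathbb{R}^{d\times d}$, $B\in\mathbb{R}^{d\times n}$, $\rho>0$, and let $M=\begin{bmatrix} Q & S^*\\ S & R\end{bmatrix}$ be a symmetric $(d+n)\times(d+n)$ real matrix with $Q=Q^*\in\mathbb{R}^{d\times d}$, $S\in\mathbb{R}^{n\times d}$, $R=R^*\in\mathbb{R}^{n\times n}$. If there exist $N\in\mathbb{R}^{n\times d}$ and $\varepsilon\in[0,2/\|R\|]$ such that $A+B(I+\varepsilon R)N+\varepsilon BS$ is $\rho$-Schur and \[ Q + 2\,\Re\, S^*N + N^*RN \geq 0, \] then $(A,B,M)$ is $\rho$-minimally stable.
   Context: Let $\ell_k$ denote the space of sequences indexed by $\mathbb{N}_{\ge0}$ with values in $\mathbb{R}^k$. $\mathcal{B}(A,B)=\{(x,u)\in\ell_{d+n}: x(k+1)=Ax(k)+Bu(k)\ \forall k\}$. A pair $(x,u)\in\ell_{d+n}$ belongs to $\mathrm{IQC}(M,\rho)$ if $\sum_{k=0}^N \rho^{-2k}\big(\langle Qx(k),x(k)\rangle + 2\langle Sx(k),u(k)\rangle + \langle Ru(k),u(k)\rangle\big)\ge 0$ for all $N\ge0$. The triple $(A,B,M)$ is $\rho$-minimally stable if for every $x_0\in\mathbb{R}^d$ there exists $(x,u)\in\mathcal{B}(A,B)\cap\mathrm{IQC}(M,\rho)$ with $x(0)=x_0$ and $\rho^{-k}x(k)\to0$ as $k\to\infty$. A square matrix is $\rho$-Schur if all its eigenvalues lie in the open disk of radius $\rho$. $\|R\|$ is the operator norm. *)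

(* Defs.v *)
From HB Require Import structures.
From mathcomp Require Import all_boot all_order all_algebra.
From mathcomp Require Import all_classical all_reals all_analysis.
From mathcomp Require Import complex.
Set Implicit Arguments. Unset Strict Implicit. Unset Printing Implicit Defensive.
Import Order.TTheory GRing.Theory Num.Theory.
Import numFieldNormedType.Exports.
Local Open Scope ring_scope.
Local Open Scope classical_set_scope.
Local Open Scope complex_scope.

Definition euclid_norm (R : realType) (m : nat) (v : 'cV[R]_m) : R :=
  Num.sqrt (\sum_(i < m) v i 0 ^+ 2).

Definition op_norm (R : realType) (m n : nat) (T : 'M[R]_(m, n)) : R :=
  sup [set euclid_norm (T *m v) | v in [set v : 'cV[R]_n | euclid_norm v <= 1]].

Definition rho_Schur (R : realType) (d : nat) (A : 'M[R]_d) (rho : R) : Prop :=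
  forall lambda : R[i],
    eigenvalue (map_mx (real_complex R) A) lambda -> `|lambda| < rho%:C.

Definition psd (R : realType) (d : nat) (P : 'M[R]_d) : Prop :=
  forall x : 'cV[R]_d, 0 <= (x^T *m P *m x) 0 0.

Definition behavior (R : realType) (d n : nat) (A : 'M[R]_d) (B : 'M[R]_(d, n))
    (x : nat -> 'cV[R]_d) (u : nat -> 'cV[R]_n) : Prop :=
  forall k, x k.+1 = A *m x k + B *m u k.

(* IQC(M, rho), with M = [Q S^T; S R]. *)
Definition IQC (R : realType) (d n : nat) (Q : 'M[R]_d) (S : 'M[R]_(n, d))
    (Rm : 'M[R]_n) (rho : R)
    (x : nat -> 'cV[R]_d) (u : nat -> 'cV[R]_n) : Prop :=
  forall N : nat,
    0 <= \sum_(0 <= k < N.+1) rho ^- (2 * k) *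
          (((x k)^T *m Q *m x k) 0 0 + 2 * ((u k)^T *m S *m x k) 0 0
           + ((u k)^T *m Rm *m u k) 0 0).

Definition rho_minimally_stable (R : realType) (d n : nat) (A : 'M[R]_d)
    (B : 'M[R]_(d, n)) (Q : 'M[R]_d) (S : 'M[R]_(n, d)) (Rm : 'M[R]_n)
    (rho : R) : Prop :=
  forall x0 : 'cV[R]_d, exists (x : nat -> 'cV[R]_d) (u : nat -> 'cV[R]_n),
    [/\ behavior A B x u, IQC Q S Rm rho x u, x 0%N = x0 &
        (fun k => rho ^- k *: x k) @ \oo --> (0 : 'cV[R]_d)].

(* Main.v *)
Require Import Defs.
From HB Require Import structures.
From mathcomp Require Import all_boot all_order all_algebra.
From mathcomp Require Import all_classical all_reals all_analysis.
From mathcomp Require Import complex.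
From mathcomp Require Import lra.
Import Order.TTheory GRing.Theory Num.Theory.
Import numFieldNormedType.Exports.
Local Open Scope ring_scope.
Local Open Scope classical_set_scope.
Set Implicit Arguments. Unset Strict Implicit. Unset Printing Implicit Defensive.
Lemma core (R : realType) (a g : nat -> R) (r : R) : 0 <= r -> r < 1 ->
  (forall k, 0 <= a k) -> (forall k, a k.+1 <= r * a k + g k) ->
  g @ \oo --> 0 -> a @ \oo --> 0.
Proof.
move=> r0 r1 a0 rec gcv; apply/cvgr0Pnorm_lt => e e0.
have e2 : 0 < e / 2 by rewrite divr_gt0.
have e1 : 0 < e / 2 * (1 - r) by rewrite mulr_gt0 // subr_gt0.
have [K _ HK] := (cvgr0Pnorm_lt g).1 gcv _ e1.
pose D j := a (K + j)%N - e / 2.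
have HD j : D j.+1 <= r * D j.
  rewrite /D addnS; have := rec (K + j)%N.
  have := HK (K + j)%N (leq_addr _ _) => /= /ltW gl.
  move: (ler_norm (g (K + j)%N)) => gn h.
  set x := e / 2 in gl e2 *.
  nra.
have HDj j : D j <= r ^+ j * D 0%N.
  elim: j => [|j IH]; first by rewrite expr0 mul1r.
  by rewrite exprS -mulrA (le_trans (HD j)) // ler_wpM2l.
have r1' : `|r| < 1 by rewrite ger0_norm.
have c0 : 0 < e / 2 / (`|D 0%N| + 1) by rewrite divr_gt0 // ltr_pwDr.
have [J _ HJ] := (cvgr0Pnorm_lt _).1 (cvg_expr r1') _ c0.
exists (K + J)%N => // k /= Hk.
have -> : k = (K + (k - K))%N by rewrite subnKC // (leq_trans (leq_addr _ _) Hk).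
rewrite ger0_norm //.
have HJk : (J <= k - K)%N by rewrite leq_subRL // (leq_trans (leq_addr _ _) Hk).
have := HJ _ HJk; rewrite /= ger0_norm ?exprn_ge0 // => hr.
have := HDj (k - K)%N; rewrite /D.
set y := r ^+ (k - K).
have yp : 0 <= y by rewrite exprn_ge0.
move: hr; rewrite ltr_pdivlMr ?ltr_pwDr // => hr.
move: hr; rewrite /D addn0 -/y => hr.
have hz := ler_norm (a K - e / 2).
move: hr hz; set z := `|a K - e / 2|.
nra.
Qed.
Local Open Scope complex_scope.
Section C.
Variable R : realType.
Definition nc (z : R[i]) : R := complex.Re `|z|.
Lemma ncE z : `|z| = (nc z)%:C.
Proof. by rewrite /nc normc_def. Qed.
Lemma nc_ge0 z : 0 <= nc z.
Proof. by rewrite -ler0c -ncE. Qed.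
Lemma ncD x y : nc (x + y) <= nc x + nc y.
Proof. by rewrite -lecR rmorphD /= -!ncE ler_normD. Qed.
Lemma ncM x y : nc (x * y) = nc x * nc y.
Proof. by apply: complexI; rewrite rmorphM /= -!ncE normrM. Qed.
Lemma nc_real (r : R) : nc r%:C = `|r|.
Proof. by rewrite /nc normc_def /= expr0n /= addr0 sqrtr_sqr. Qed.
Lemma nc0 : nc 0 = 0.
Proof. by rewrite /nc normr0. Qed.
End C.
Section C2.
Variable R : realType.
Lemma step_c (s h : nat -> R[i]) (z : R[i]) : nc z < 1 ->
  (forall k, s k.+1 = z * s k + h k) ->
  (fun k => nc (h k)) @ \oo --> 0 -> (fun k => nc (s k)) @ \oo --> 0.
Proof.
move=> z1 rec hc; apply: (@core R _ (fun k => nc (h k)) (nc z) (nc_ge0 z) z1 _ _ hc) => [k|k]; first exact: nc_ge0.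
by rewrite rec -ncM ncD.
Qed.

Definition Zc n (G : 'M[R[i]]_n) (w : 'cV[R[i]]_n) :=
  forall i, (fun k => nc ((G ^+ k *m w) i 0)) @ \oo --> 0.

Lemma vec_conv n (G : 'M[R[i]]_n) (L : seq R[i]) :
  all (fun z => nc z < 1) L ->
  forall w, Zc G ((\prod_(z <- L) (G - z%:M)) *m w) -> Zc G w.
Proof.
elim: L => [|z L IH] /=.
  by move=> _ w; rewrite big_nil mul1mx.
move=> /andP[z1 Hall] w; rewrite big_cons.
have mE : forall A B : 'M[R[i]]_n, A * B = A *m B by [].
rewrite mE -mulmxA => H.
apply: IH => // i.
set u := (\prod_(j <- L) (G - j%:M)) *m w.
apply: (step_c (h := fun k => (G ^+ k *m ((G - z%:M) *m u)) i 0) z1) => [k|]; last exact: H.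
have GS : G ^+ k *m G = G ^+ k.+1 by rewrite exprSr.
rewrite mulmxBl mul_scalar_mx mulmxBr -scalemxAr mulmxA GS.
by rewrite !mxE addrCA subrr addr0.
Qed.
End C2.
Section S.
Variable R : realType.
Local Notation f := (real_complex R).

Lemma map_exp n (G : 'M[R]_n) k : map_mx f (G ^+ k) = (map_mx f G) ^+ k.
Proof.
elim: k => [|k IH]; first by rewrite !expr0 map_mx1.
by rewrite !exprS -!mulmxE map_mxM IH.
Qed.

Lemma schur_cvg d (F : 'M[R]_d) (rho : R) (x0 : 'cV[R]_d) : 0 < rho ->
  rho_Schur F rho -> (fun k => rho ^- k *: (F ^+ k *m x0)) @ \oo --> (0 : 'cV[R]_d).
Proof.
case: d F x0 => [|d'] F x0 rho0 HS.
  under eq_fun do rewrite flatmx0.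
  exact: cvg_cst.
set G := rho^-1 *: F.
have HG k : rho ^- k *: (F ^+ k *m x0) = G ^+ k *m x0.
  suff -> : G ^+ k = rho ^- k *: F ^+ k by rewrite scalemxAl.
  elim: k => [|k IH]; first by rewrite !expr0 invr1 scale1r.
  rewrite !exprS IH -!mulmxE -scalemxAl -scalemxAr scalerA.
  by rewrite invfM.
under eq_fun do rewrite HG.
pose Gc := map_mx f G; pose x0c := map_mx f x0.
have Hmap k i : ((G ^+ k *m x0) i 0)%:C = (Gc ^+ k *m x0c) i 0.
  by rewrite -map_exp -map_mxM [RHS]mxE.
have eig z : root (char_poly Gc) z -> nc z < 1.
  rewrite -eigenvalue_root_char => /eigenvalueP [v Hv vn0].
  have Hv' : v *m map_mx f F = (rho%:C * z) *: v.
    move: Hv; rewrite /Gc /G map_mxZ -scalemxAr => /(congr1 (fun M => rho%:C *: M)).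
    rewrite !scalerA -rmorphM /= mulfV ?gt_eqF // rmorph1 scale1r => ->.
    by [].
  have /HS : eigenvalue (map_mx f F) (rho%:C * z) by apply/eigenvalueP; exists v.
  rewrite normrM !ncE nc_real ger0_norm ?ltW // -rmorphM ltcR /=.
  by rewrite -[X in _ < X]mulr1 ltr_pM2l.
have [r Hr] := closed_field_poly_normal (char_poly Gc).
rewrite (monicP (char_poly_monic _)) scale1r in Hr.
have Hall : all (fun z => nc z < 1) r.
  by apply/allP => z zr; apply: eig; rewrite Hr root_prod_XsubC.
have CH := Cayley_Hamilton Gc.
rewrite Hr rmorph_prod /= in CH.
have CH' : \prod_(z <- r) (Gc - z%:M) = 0.
  rewrite -CH; apply: eq_bigr => z _.
  by rewrite rmorphB /= horner_mx_X horner_mx_C.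
have HZ : Zc Gc x0c.
  apply: (vec_conv Hall); rewrite CH' mul0mx => i.
  under eq_fun do rewrite mulmx0 mxE nc0.
  exact: cvg_cst.
apply/cvgr0Pnorm_lt => e e0.
have Hij : forall ij : 'I_d'.+1 * 'I_1,
    \forall k \near \oo, `|(G ^+ k *m x0) ij.1 ij.2| < e.
  move=> [i j]; rewrite /= (ord1 j).
  have := HZ i; under eq_fun do rewrite -Hmap nc_real.
  move=> /(cvgr0Pnorm_lt _).1 /(_ e e0).
  by apply: filterS => k /=; rewrite normr_id.
near=> k.
have Hk : forall ij : 'I_d'.+1 * 'I_1, `|(G ^+ k *m x0) ij.1 ij.2| < e.
  near: k; exact: filter_forall.
rewrite -[`|_|]/(mx_norm _) mx_normrE.
by apply: bigmax_lt.
Unshelve. all: by end_near.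
Qed.
End S.
Section Dot.
Variable R : realType.
Definition dot m (a b : 'cV[R]_m) : R := (a^T *m b) 0 0.

Lemma dotE m (a b : 'cV[R]_m) : dot a b = \sum_i a i 0 * b i 0.
Proof. by rewrite /dot mxE; apply: eq_bigr => i _; rewrite mxE. Qed.
Lemma dotC m (a b : 'cV[R]_m) : dot a b = dot b a.
Proof. by rewrite !dotE; apply: eq_bigr => i _; rewrite mulrC. Qed.
Lemma dotDr m (a b c : 'cV[R]_m) : dot a (b + c) = dot a b + dot a c.
Proof. by rewrite /dot mulmxDr mxE. Qed.
Lemma dotDl m (a b c : 'cV[R]_m) : dot (b + c) a = dot b a + dot c a.
Proof. by rewrite dotC dotDr !(dotC a). Qed.
Lemma dotZr m (a b : 'cV[R]_m) t : dot a (t *: b) = t * dot a b.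
Proof. by rewrite /dot -scalemxAr mxE. Qed.
Lemma dotZl m (a b : 'cV[R]_m) t : dot (t *: b) a = t * dot b a.
Proof. by rewrite dotC dotZr dotC. Qed.
Lemma dot_mulmx m n (M : 'M[R]_(n, m)) (a : 'cV[R]_m) b :
  dot (M *m a) b = dot a (M^T *m b).
Proof. by rewrite /dot trmx_mul mulmxA. Qed.
Lemma dot_ge0 m (a : 'cV[R]_m) : 0 <= dot a a.
Proof. by rewrite dotE; apply: sumr_ge0 => i _; rewrite -expr2 sqr_ge0. Qed.
Lemma en_sq m (a : 'cV[R]_m) : euclid_norm a ^+ 2 = dot a a.
Proof.
rewrite /euclid_norm sqr_sqrtr ?dotE; last by apply: sumr_ge0 => i _; rewrite sqr_ge0.
by apply: eq_bigr => i _; rewrite expr2.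
Qed.
Lemma en_ge0 m (a : 'cV[R]_m) : 0 <= euclid_norm a.
Proof. exact: sqrtr_ge0. Qed.
Lemma en_scale m (a : 'cV[R]_m) t : euclid_norm (t *: a) = `|t| * euclid_norm a.
Proof.
rewrite /euclid_norm -sqrtr_sqr -sqrtrM ?sqr_ge0 // mulr_sumr.
by congr Num.sqrt; apply: eq_bigr => i _; rewrite mxE exprMn.
Qed.
Lemma dot_eq0 m (a : 'cV[R]_m) : dot a a = 0 -> a = 0.
Proof.
rewrite dotE => /psumr_eq0P H; apply/matrixP => i j; rewrite (ord1 j) mxE.
by apply/eqP; rewrite -sqrf_eq0 expr2; apply/eqP; apply: H => // k _; rewrite -expr2 sqr_ge0.
Qed.
Lemma en_eq0 m (a : 'cV[R]_m) : euclid_norm a = 0 -> a = 0.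
Proof. by move=> h; apply: dot_eq0; rewrite -en_sq h expr0n. Qed.

Lemma op_norm_ub m (M : 'M[R]_m) v : euclid_norm v <= 1 ->
  euclid_norm (M *m v) <= op_norm M.
Proof.
move=> hv; apply: sup_upper_bound; last by exists v.
split; first by exists (euclid_norm (M *m 0)), 0 => //=; rewrite /euclid_norm big1 ?sqrtr0 // => i _; rewrite mxE expr0n.
pose T i := \sum_j `|M i j|.
exists (Num.sqrt (\sum_i T i ^+ 2)) => _ [w /= hw <-].
rewrite /euclid_norm; apply: ler_wsqrtr; apply: ler_sum => i _.
have hs : \sum_i w i 0 ^+ 2 <= 1.
  move: hw; rewrite /euclid_norm => hw.
  have h0 : 0 <= \sum_i w i 0 ^+ 2 by apply: sumr_ge0 => k _; rewrite sqr_ge0.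
  by rewrite -(sqr_sqrtr h0) -(expr1n _ 2) lerXn2r // ?nnegrE ?sqrtr_ge0.
have hwj j : `|w j 0| <= 1.
  have : w j 0 ^+ 2 <= 1.
    apply: le_trans hs; rewrite (bigD1 j) //= lerDl.
    by apply: sumr_ge0 => k _; rewrite sqr_ge0.
  rewrite -real_normK ?num_real // => h.
  have := normr_ge0 (w j 0); nra.
have hT : `|(M *m w) i 0| <= T i.
  rewrite mxE; apply: le_trans (ler_norm_sum _ _ _) _.
  apply: ler_sum => j _; rewrite normrM.
  by rewrite -[X in _ <= X]mulr1 ler_wpM2l.
rewrite -real_normK ?num_real //.
by rewrite lerXn2r // ?nnegrE // (le_trans _ hT).
Qed.

Lemma op_norm_ge0 m (M : 'M[R]_m) : 0 <= op_norm M.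
Proof.
apply: le_trans (op_norm_ub M (v := 0) _); first exact: en_ge0.
by rewrite /euclid_norm big1 ?sqrtr0 // => i _; rewrite mxE expr0n.
Qed.

Lemma op_bound m (M : 'M[R]_m) w :
  dot (M *m w) (M *m w) <= op_norm M ^+ 2 * dot w w.
Proof.
have [h0|hp] := eqVneq (euclid_norm w) 0.
  by rewrite (en_eq0 h0) mulmx0 /dot !mulmx0 mxE mulr0.
have ep : 0 < euclid_norm w by rewrite lt_def hp en_ge0.
have := op_norm_ub M (v := (euclid_norm w)^-1 *: w).
rewrite en_scale -scalemxAr en_scale ger0_norm ?invr_ge0 ?en_ge0 // mulVf //.
move=> /(_ (lexx _)); rewrite ler_pdivrMl // => h.
rewrite -!en_sq -exprMn lerXn2r // ?nnegrE ?en_ge0 // mulrC.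
  by rewrite mulr_ge0 ?op_norm_ge0 ?en_ge0.
by [].
Qed.
End Dot.
Lemma sigma_ge0 (R : realType) d n (Q : 'M[R]_d) (S : 'M[R]_(n, d)) (Rm : 'M[R]_n)
  (N : 'M[R]_(n, d)) (eps : R) (v : 'cV[R]_d) (u : 'cV[R]_n) :
  Rm^T = Rm -> 0 <= eps -> eps * op_norm Rm <= 2 ->
  psd (Q + (S^T *m N + N^T *m S) + N^T *m Rm *m N) ->
  u = ((1%:M + eps *: Rm) *m N + eps *: S) *m v ->
  0 <= (v^T *m Q *m v) 0 0 + 2 * (u^T *m S *m v) 0 0 + (u^T *m Rm *m u) 0 0.
Proof.
move=> RT e0 eR Hpsd Hu0.
have E1 (m k : nat) (a : 'cV[R]_m) (M : 'M[R]_(m, k)) b : (a^T *m M *m b) 0 0 = dot a (M *m b).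
  by rewrite /dot mulmxA.
rewrite !E1.
set Nv := N *m v; set Sv := S *m v; set w := Rm *m Nv + Sv.
have Hu : u = Nv + eps *: w.
  rewrite Hu0 mulmxDl -mulmxA -scalemxAl mulmxDl mul1mx -scalemxAl.
  by rewrite /w scalerDr addrA.
have Hw : dot w w = dot w (Rm *m Nv) + dot w Sv by rewrite {2}/w dotDr.
clearbody w.
have Hp : 0 <= dot v (Q *m v) + 2 * dot Nv Sv + dot Nv (Rm *m Nv).
  have := Hpsd v; rewrite E1 !mulmxDl !dotDr -!mulmxA -!dot_mulmx.
  by rewrite (dotC Sv) -/Nv -/Sv; lra.
have Hs : dot u (Rm *m u) = dot Nv (Rm *m Nv) + 2 * eps * dot w (Rm *m Nv)
    + eps ^+ 2 * dot w (Rm *m w).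
  rewrite Hu mulmxDr -scalemxAr !dotDl !dotDr !dotZl !dotZr.
  have -> : dot Nv (Rm *m w) = dot w (Rm *m Nv).
    by rewrite -{1}RT -dot_mulmx dotC.
  by rewrite expr2; lra.
have Hs2 : dot u Sv = dot Nv Sv + eps * dot w Sv by rewrite Hu dotDl dotZl.
have Hb : 0 <= 2 * eps * dot w w + eps ^+ 2 * dot w (Rm *m w).
  have [z zE] : {z | z = eps *: (Rm *m w)} by exists (eps *: (Rm *m w)).
  have H1 := dot_ge0 (2 *: w + z).
  rewrite !dotDl !dotDr !dotZl !dotZr (dotC z w) in H1.
  have Hz1 : dot w z = eps * dot w (Rm *m w) by rewrite zE dotZr.
  have Hz2 : dot z z = eps ^+ 2 * dot (Rm *m w) (Rm *m w) by rewrite zE dotZl dotZr expr2 mulrA.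
  have H2 := op_bound Rm w.
  have Hww := dot_ge0 w.
  have Hon := op_norm_ge0 Rm.
  have H3 : (eps * op_norm Rm) ^+ 2 <= 4.
    have : 0 <= eps * op_norm Rm by rewrite mulr_ge0.
    move: eR; set t := eps * op_norm Rm; nra.
  have h4 : eps ^+ 2 * dot (Rm *m w) (Rm *m w) <= 4 * dot w w.
    apply: (le_trans (ler_wpM2l (sqr_ge0 eps) H2)).
    rewrite mulrA -exprMn ler_wpM2r //.
  have h5 : 0 <= 8 * dot w w + 4 * (eps * dot w (Rm *m w)).
    move: H1; rewrite Hz1 Hz2 => H1; lra.
  move: h5; set c := dot w (Rm *m w); set ww := dot w w => h5.
  nra.
rewrite Hs Hs2; move: Hb Hp; rewrite Hw; lra.
Qed.
Unset Implicit Arguments.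
Local Close Scope classical_set_scope.
Local Open Scope complex_scope.

Theorem lemma2p4 (R : realType) (d n : nat) (A : 'M[R]_d) (B : 'M[R]_(d, n))
    (Q : 'M[R]_d) (S : 'M[R]_(n, d)) (Rm : 'M[R]_n) (rho : R) :
  0 < rho -> Q^T = Q -> Rm^T = Rm ->
  (exists (N : 'M[R]_(n, d)) (eps : R),
      [/\ 0 <= eps, eps * op_norm Rm <= 2,
          rho_Schur (A + B *m (1%:M + eps *: Rm) *m N + eps *: (B *m S)) rho &
          psd (Q + (S^T *m N + N^T *m S) + N^T *m Rm *m N)]) ->
  rho_minimally_stable A B Q S Rm rho.
Proof.
move=> rho0 QT RT [N [eps [e0 eR HS Hpsd]]] x0.
set F := A + B *m (1%:M + eps *: Rm) *m N + eps *: (B *m S).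
set K := (1%:M + eps *: Rm) *m N + eps *: S.
have FK : F = A + B *m K.
  by rewrite /F /K [in RHS]mulmxDr [in RHS]mulmxA -[in RHS]scalemxAr addrA.
exists (fun k => F ^+ k *m x0), (fun k => K *m (F ^+ k *m x0)); split.
- move=> k /=; rewrite exprS -mulmxE -mulmxA.
  set y := F ^+ k *m x0.
  by rewrite FK mulmxDl mulmxA.
- move=> M; apply: sumr_ge0 => k _; apply: mulr_ge0.
    by rewrite invr_ge0 exprn_ge0 // ltW.
  by apply: (sigma_ge0 RT e0 eR Hpsd).
- by rewrite expr0 mul1mx.
- exact: schur_cvg.
Qed.
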